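(* Let $\mathcal{R}$ be a right amenable cell space with finite stabiliser $G_0$, let $Q$ be a finite set with at least two elements, and let $\mathcal{F}=(F_i)_{i\in I}$ be a right Følner net in $\mathcal{R}$. Let $X\subseteq Q^M$ be $\triangleright$-invariant, and let $E$ be a nonempty finite subset of $G/G_0$ such that $\pi_{m_0\triangleleft E}(X)\subsetneq Q^{m_0\triangleleft E}$. Then $\mathrm{h}_{\mathcal{F}}(X)<\log|Q|$.
   Context: A cell space $\mathcal{R}$ consists of a group $G$ acting transitively on the left on a nonempty set $M$ via $\triangleright$, a point $m_0\in M$ and a family $(g_{m_0,m})_{m\in M}$ in $G$ with $g_{m_0,m}\triangleright m_0=m$. $G_0$ is the stabiliser of $m_0$ and $G/G_0$ the set of left cosets. The right semi-action $\triangleleft\colon M\times G/G_0\to M$ is $m\triangleleft gG_0=g_{m_0,m}g\triangleright m_0$; $m\triangleleft E=\{m\triangleleft e:e\in E\}$. $\mathcal{R}$ is right amenable if there is a finitely additive probability measure $\mu$ on the power set of $M$ such that $\mu(\{a\triangleleft\mathfrak{g}:a\in A\})=\mu(A)$ whenever $\mathfrak{g}\in G/G_0$, $A\subseteq M$ and $m\mapsto m\triangleleft\mathfrak{g}$ is injective on $A$. A right Følner net in $\mathcal{R}$ is a net $(F_i)_{i\in I}$ (over a directed set) of nonempty finite subsets of $M$ with $\lim_{i}\frac{|F_i\setminus\{m: m\triangleleft\mathfrak{g}\in F_i\}|}{|F_i|}=0$ for every $\mathfrak{g}\in G/G_0$. $G$ acts on patterns by $(g\triangleright p)\colon g\triangleright\mathrm{dom}(p)\to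 Q$, $m\mapsto p(g^{-1}\triangleright m)$ for $p\colon A\to Q$, $A\subseteq M$; $X\subseteq Q^M$ is $\triangleright$-invariant if $g\triangleright X\subseteq X$ for all $g\in G$. For $A\subseteq M$, $\pi_A\colon Q^M\to Q^A$ is restriction; $\mathrm{h}_{\mathcal{F}}(X)=\limsup_{i\in I}\frac{\log|\pi_{F_i}(X)|}{|F_i|}$. *)

(* Defs.v *)
From HB Require Import structures.
From mathcomp Require Import all_boot all_order all_algebra.
From mathcomp Require Import monoid.
From mathcomp Require Import finmap.
From mathcomp Require Import all_classical all_reals all_analysis.

Set Implicit Arguments.
Unset Strict Implicit.
Unset Printing Implicit Defensive.
Import Order.TTheory GRing.Theory Num.Theory.

Local Open Scope classical_set_scope.

Section CellSpace.
Variables (G : groupType) (M : choiceType) (act : G -> M -> M) (m0 : M)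
          (gfam : M -> G).

Definition is_left_action : Prop :=
  (forall m, act 1%g m = m) /\ (forall g h m, act (g * h)%g m = act g (act h m)).

Definition is_transitive : Prop := forall m m' : M, exists g, act g m = m'.

Record is_cell_space : Prop := IsCellSpace {
  cs_action : is_left_action;
  cs_transitive : is_transitive;
  cs_gfam : forall m, act (gfam m) m0 = m }.

Definition stab : set G := [set g | act g m0 = m0].

Definition lcoset (g : G) : set G := [set h | exists2 k, stab k & h = (g * k)%g].

Definition coset := {C : set G | exists g, C = lcoset g}.

Definition coset_of (g : G) : coset := exist _ (lcoset g) (ex_intro _ g erefl).

Definition coset_rep (C : coset) : G := projT1 (cid (proj2_sig C)).

(* The right semi-action  m <| g G_0 = g_{m0,m} g |> m0 (independent of the  *)
(* representative g of the coset).                                          *)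
Definition semi_act (m : M) (C : coset) : M := act (gfam m * coset_rep C)%g m0.

Definition right_amenable (R : realType) : Prop :=
  exists mu : set M -> R,
    [/\ (forall A, 0 <= mu A)%R,
        mu setT = 1%R,
        (forall A B, A `&` B = set0 -> mu (A `|` B) = (mu A + mu B)%R) &
        (forall (C : coset) (A : set M),
            (forall x y, A x -> A y -> semi_act x C = semi_act y C -> x = y) ->
            mu [set semi_act a C | a in A] = mu A)].

End CellSpace.

Arguments stab {G M} act m0.
Arguments lcoset {G M} act m0 g.
Arguments coset {G M} act m0.
Arguments coset_of {G M} act m0 g.
Arguments coset_rep {G M act m0} C.
Arguments semi_act {G M} act m0 gfam m C.
Arguments right_amenable {G M} act m0 gfam R.
Arguments is_cell_space {G M} act m0 gfam.

Record is_directed (I : Type) (le : I -> I -> Prop) : Prop := IsDirected {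
  dir_refl : forall i, le i i;
  dir_trans : forall i j k, le i j -> le j k -> le i k;
  dir_nonempty : inhabited I;
  dir_upper : forall i j, exists k, le i k /\ le j k }.

Definition net_cvg (R : realType) (I : Type) (le : I -> I -> Prop)
  (a : I -> R) (l : R) : Prop :=
  forall eps : R, (0 < eps)%R -> exists i0, forall i, le i0 i -> (`|a i - l| < eps)%R.

Definition net_limsup (R : realType) (I : Type) (le : I -> I -> Prop)
  (a : I -> R) : \bar R :=
  ereal_inf [set ereal_sup [set (a j)%:E | j in [set j | le i j]] | i in [set: I]].

Local Open Scope fset_scope.

Definition right_folner_net (G : groupType) (M : choiceType) (act : G -> M -> M)
  (m0 : M) (gfam : M -> G) (R : realType) (I : Type) (le : I -> I -> Prop)
  (F : I -> {fset M}) : Prop :=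
  is_directed le /\
  (forall i, F i != fset0) /\
  (forall C : coset act m0,
     net_cvg le
       (fun i => (#|` [fset m in F i | semi_act act m0 gfam m C \notin F i]|%:R
                  / #|` F i|%:R : R)%R) 0%R).

Definition restr (M Q : Type) (A : set M) (x : M -> Q) : {m : M | A m} -> Q :=
  fun m => x (proj1_sig m).

Definition npatterns (M : choiceType) (Q : finType) (X : set (M -> Q))
  (F : {fset M}) : nat :=
  #|[set p : {ffun F -> Q} | `[< exists2 x, X x & forall m : F, x (val m) = p m >] ]%SET|.

Definition entropy (R : realType) (M : choiceType) (Q : finType) (I : Type)
  (le : I -> I -> Prop) (F : I -> {fset M}) (X : set (M -> Q)) : \bar R :=
  net_limsup le (fun i => (ln (npatterns X (F i))%:R / #|` F i|%:R : R)%R).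

Definition act_invariant (G : groupType) (M Q : Type) (act : G -> M -> M)
  (X : set (M -> Q)) : Prop :=
  forall g x, X x -> X (fun m => x (act g^-1%g m)).

Arguments net_cvg {R I} le a l.
Arguments net_limsup {R I} le a.
Arguments right_folner_net {G M} act m0 gfam R {I} le F.
Arguments restr {M Q} A x _.
Arguments npatterns {M Q} X F.
Arguments entropy R {M Q I} le F X.
Arguments act_invariant {G M Q} act X.

(* Main.v *)
Require Import Defs.
From HB Require Import structures.
From mathcomp Require Import all_boot all_order all_algebra.
From mathcomp Require Import monoid.
From mathcomp Require Import finmap.
From mathcomp Require Import all_classical all_reals all_analysis.
From mathcomp Require Import ring lra.
Set Implicit Arguments.
Unset Strict Implicit.
Unset Printing Implicit Defensive.
Import Order.TTheory GRing.Theory Num.Theory.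

Section Count.
Variables (M : choiceType) (Q : finType) (q0 : Q) (X : set (M -> Q)) (F : {fset M}).

Definition Pat (S : {set F}) : {set {ffun F -> Q}} :=
  [set p : {ffun F -> Q} | `[< exists2 x, X x & forall m : F, p m = if m \in S then x (fsval m) else q0 >] ].

Lemma Pat_submult (S1 S2 : {set F}) : (#|Pat (S1 :|: S2)| <= #|Pat S1| * #|Pat S2|)%N.
Proof.
pose psi (pq : {ffun F -> Q} * {ffun F -> Q}) : {ffun F -> Q} :=
  [ffun y => if y \in S1 then pq.1 y else pq.2 y].
rewrite -cardsX.
apply: (leq_trans _ (leq_imset_card psi _)).
apply: subset_leq_card. apply/fintype.subsetP => p.
rewrite inE => /asboolP [x Xx Hp].
apply/imsetP.
exists ([ffun m => if m \in S1 then x (fsval m) else q0],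
        [ffun m => if m \in S2 then x (fsval m) else q0]).
  rewrite inE /=; apply/andP; split; rewrite inE; apply/asboolP; exists x => // m;
  by rewrite ffunE.
apply/ffunP => y; rewrite /psi !ffunE Hp /= inE.
by case: (y \in S1) => //=; rewrite ffunE.
Qed.

Lemma Pat_sub (S : {set F}) : Pat S \subset pffun_on q0 S predT.
Proof.
apply/fintype.subsetP => p; rewrite inE => /asboolP [x Xx Hp].
apply/pffun_onP; split; last by move=> ?.
apply/fintype.subsetP => y; rewrite inE Hp; case: ifP => // _; by rewrite eqxx.
Qed.

Lemma Pat_card (S : {set F}) : (#|Pat S| <= #|Q| ^ #|S|)%N.
Proof.
have := subset_leq_card (Pat_sub S).
by rewrite card_pffun_on.
Qed.

Lemma Pat_tile (S : {set F}) (f : {ffun F -> Q}) :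
  f \in pffun_on q0 S predT -> f \notin Pat S -> (#|Pat S| < #|Q| ^ #|S|)%N.
Proof.
move=> fin fnot.
rewrite -(card_pffun_on q0 S (predT : {pred Q})).
apply: proper_card; apply/properP; split; first exact: Pat_sub.
by exists f.
Qed.


Variable Ut : F -> {set F}.

Definition Wt (ts : seq F) : {set F} := \bigcup_(t <- ts) Ut t.

Fixpoint greedy (acc s : seq F) : seq F :=
  match s with
  | [::] => acc
  | c :: s' => greedy (if [disjoint Ut c & Wt acc] then c :: acc else acc) s'
  end.

Lemma greedy_suffix acc s : exists r, greedy acc s = r ++ acc.
Proof.
elim: s acc => [|c s IH] acc /=; first by exists [::].
have [r ->] := IH (if [disjoint Ut c & Wt acc] then c :: acc else acc).
case: ifP => _; last by exists r.
by exists (rcons r c); rewrite cat_rcons.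
Qed.

Lemma Wt_cat r s : Wt (r ++ s) = Wt r :|: Wt s.
Proof. by rewrite /Wt big_cat. Qed.

Lemma greedy_cover acc s :
  (forall c, c \in s -> Ut c != finset.set0) ->
  forall c, c \in s -> ~~ [disjoint Ut c & Wt (greedy acc s)].
Proof.
elim: s acc => [|c s IH] acc Hne d //=.
rewrite inE => /orP [/eqP -> | ds]; last first.
  by apply: IH => // e es; apply: Hne; rewrite inE es orbT.
set acc' := (if _ then _ else _).
have [r ->] := greedy_suffix acc' s.
rewrite Wt_cat -finset.setI_eq0 finset.setIUr finset.setU_eq0 negb_and.
apply/orP; right; rewrite finset.setI_eq0 /acc'; case: ifP => [_|-> //].
rewrite /Wt big_cons -finset.setI_eq0 finset.setIUr finset.setIid finset.setU_eq0 negb_and.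
by apply/orP; left; apply: Hne; rewrite inE eqxx.
Qed.

Variable R : realType.
Local Open Scope ring_scope.

Lemma greedy_inv (N : nat) acc s :
  let q := #|Q| in
  (forall c, c \in s -> (#|Pat (Ut c)| < q ^ #|Ut c|)%N /\ (#|Ut c| <= N)%N) ->
  (#|Pat (Wt acc)|%:R <= (q%:R ^+ #|Wt acc| * (1 - (q%:R ^+ N)^-1) ^+ size acc :> R)) ->
  (#|Pat (Wt (greedy acc s))|%:R <=
      (q%:R ^+ #|Wt (greedy acc s)| * (1 - (q%:R ^+ N)^-1) ^+ size (greedy acc s) :> R)).
Proof.
move=> q.
have q0P : (0 < q)%N by apply/card_gt0P; exists q0.
have qR : (1 <= q%:R :> R) by rewrite ler1n.
elim: s acc => [|c s IH] acc Hs Hacc //=.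
apply: IH; first by move=> d ds; apply: Hs; rewrite inE ds orbT.
case: ifP => // Hdis.
have [Hc HcN] := Hs c (mem_head _ _).
rewrite /= {1 2}/Wt big_cons -/(Wt acc).
have -> : #|Ut c :|: Wt acc| = (#|Ut c| + #|Wt acc|)%N.
  by rewrite cardsU (disjoint_setI0 Hdis) cards0 subn0.
apply: (le_trans (y := (#|Pat (Ut c)| * #|Pat (Wt acc)|)%:R)).
  by rewrite ler_nat Pat_submult.
rewrite natrM exprD exprS.
have hq : 0 < q%:R ^+ N :> R by rewrite exprn_gt0 // (lt_le_trans ltr01).
have hrho : 0 <= 1 - (q%:R ^+ N)^-1 :> R.
  by rewrite subr_ge0 invf_le1 // exprn_ege1.
have H1 : #|Pat (Ut c)|%:R <= q%:R ^+ #|Ut c| * (1 - (q%:R ^+ N)^-1) :> R.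
  have : (#|Pat (Ut c)| <= q ^ #|Ut c| - 1)%N by rewrite leq_subRL ?add1n // expn_gt0 q0P.
  rewrite -(ler_nat R) => /le_trans; apply.
  rewrite natrB ?expn_gt0 ?q0P // natrX mulrBr mulr1 lerB //.
  rewrite ler_pdivrMr // mul1r -!natrX ler_nat leq_pexp2l //.
rewrite mulrACA; apply: ler_pM => //.
Qed.


Definition Bt (t : F) : {set F} := [set m | ~~ [disjoint Ut m & Ut t]].

Lemma cover_lemma ts m : ~~ [disjoint Ut m & Wt ts] -> m \in \bigcup_(t <- ts) Bt t.
Proof.
elim: ts => [|t ts IH].
  by rewrite /Wt big_nil -finset.setI_eq0 finset.setI0 eqxx.
rewrite /Wt big_cons -/(Wt ts) big_cons finset.in_setU.
rewrite -finset.setI_eq0 finset.setIUr finset.setU_eq0 negb_and => /orP [H|H].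
  by rewrite inE finset.setI_eq0 in H *; rewrite H.
by rewrite IH ?orbT // -finset.setI_eq0.
Qed.

Lemma greedy_bound (cand : {set F}) (N Nb : nat) :
  let q := #|Q| in
  (forall c, c \in cand ->
     [/\ (#|Pat (Ut c)| < q ^ #|Ut c|)%N, (#|Ut c| <= N)%N & Ut c != finset.set0]) ->
  (forall t, (#|Bt t| <= Nb)%N) ->
  exists j : nat, (#|cand| <= j * Nb)%N /\
   (#|Pat [set: F]|%:R <= (q%:R ^+ #|{: F}| * (1 - (q%:R ^+ N)^-1) ^+ j :> R)).
Proof.
move=> q Hc HB.
have q0P : (0 < q)%N by apply/card_gt0P; exists q0.
set ts := greedy [::] (enum cand).
exists (size ts); split.
  apply: (leq_trans (n := #|\bigcup_(t <- ts) Bt t|)).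
    apply: subset_leq_card; apply/fintype.subsetP => c cc.
    apply: cover_lemma; apply: greedy_cover; last by rewrite mem_enum.
    by move=> d; rewrite mem_enum => /Hc [].
  apply: (leq_trans (unstable.card_big_setU _ _ _)).
  apply: (leq_trans (n := \sum_(t <- ts) Nb)); first exact: leq_sum.
  by rewrite big_const_seq count_predT iter_addn_0 mulnC.
have Hinv := @greedy_inv N [::] (enum cand).
have := Hinv.
move=> /(_ _ _) H.
have {H} H : #|Pat (Wt ts)|%:R <= q%:R ^+ #|Wt ts| * (1 - (q%:R ^+ N)^-1) ^+ size ts :> R.
  apply: H.
    by move=> d; rewrite mem_enum => /Hc [].
  by rewrite expr0 mulr1 -natrX ler_nat Pat_card.
rewrite -(finset.setUCr (Wt ts)).
apply: (le_trans (y := (#|Pat (Wt ts)| * #|Pat (~: Wt ts)|)%:R)).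
  by rewrite ler_nat Pat_submult.
rewrite natrM -(cardsC (Wt ts)) exprD mulrAC.
apply: ler_pM => //.
by rewrite -natrX ler_nat Pat_card.
Qed.

End Count.
Local Open Scope classical_set_scope.
Lemma finite_enum T (A : set T) : finite_set A ->
  exists n (f : 'I_n -> T), (forall k, A (f k)) /\ (forall a, A a -> exists k, f k = a).
Proof.
case=> n /card_bijP [g [g' gK g'K]].
have hI : forall k : 'I_n, `I_n (nat_of_ord k).
  by move=> k; rewrite /= ltn_ord.
exists n, (fun k => val (g' (SigSub (mem_set (hI k))))); split.
  by move=> k; have := set_valP (g' (SigSub (mem_set (hI k)))).
move=> a Aa.
set v := g (SigSub (mem_set Aa)).
have vn : (val v < n)%N by have := set_valP v.
exists (Ordinal vn) => /=.
have -> : SigSub (mem_set (hI (Ordinal vn))) = v by apply: val_inj.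
by rewrite /v gK.
Qed.

Lemma cardB (K : choiceType) (F : {fset K}) (A : {set F}) (Z : finType) (phi : Z -> K) :
  (forall y, y \in A -> exists z, fsval y = phi z) -> (#|A| <= #|Z|)%N.
Proof.
move=> H.
have [->|[y0 _]] := set_0Vmem A; first by rewrite cards0.
apply: (leq_trans _ (max_card (mem (predT : {pred Z})))).
apply: (leq_trans _ (leq_imset_card (fun z => insubd y0 (phi z)) predT)).
apply: subset_leq_card; apply/fintype.subsetP => y yA.
have [z hz] := H y yA.
apply/imsetP; exists z => //.
apply: val_inj; rewrite val_insubd -hz.
by rewrite (fsvalP y).
Qed.

Section Cell.
Variables (G : groupType) (M : choiceType) (act : G -> M -> M) (m0 : M) (gfam : M -> G).
Hypothesis act1 : forall m, act 1%g m = m.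
Hypothesis actM : forall g h m, act (g * h)%g m = act g (act h m).
Hypothesis gfamP : forall m, act (gfam m) m0 = m.
Variables (Q : finType) (q0 : Q) (X : set (M -> Q)).
Hypothesis HX : act_invariant act X.
Variables (nE : nat) (eN : 'I_nE -> coset act m0) (a0 : 'I_nE).
Variables (nS : nat) (sN : 'I_nS -> G).
Hypothesis sNsurj : forall s, stab act m0 s -> exists k, sN k = s.
Let sa := semi_act act m0 gfam.
Let K := [set sa m0 (eN a) | a in [set: 'I_nE]].
Variable p : {m : M | K m} -> Q.
Hypothesis Hp : forall x, X x -> restr K x <> p.

Lemma keyid t C : act (gfam t * (gfam m0)^-1)%g (sa m0 C) = sa t C.
Proof.
by rewrite /sa /semi_act -actM -mulgA mulKg.
Qed.

Variable F : {fset M}.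
Definition Ut (t : F) : {set F} :=
  [set y : F | [exists a : 'I_nE, fsval y == sa (fsval t) (eN a)]].
Definition cand : {set F} := [set m : F | [forall a : 'I_nE, sa (fsval m) (eN a) \in F]].

Lemma Ut_card t : (#|Ut t| <= nE)%N.
Proof.
rewrite -[X in (_ <= X)%N](card_ord nE).
apply: (cardB (phi := fun a => sa (fsval t) (eN a))) => y.
by rewrite inE => /existsP [a /eqP ->]; exists a.
Qed.

Lemma Ut_ne t : t \in cand -> Ut t != finset.set0.
Proof.
rewrite inE => /forallP /(_ a0) H.
apply/set0Pn; exists (FSetSub H); rewrite inE; apply/existsP; exists a0 => /=.
by [].
Qed.

Lemma Bt_card t : (#|Bt Ut t| <= nE * nE * nS)%N.
Proof.
have -> : (nE * nE * nS = #|{: 'I_nE * 'I_nE * 'I_nS}|)%N by rewrite !card_prod !card_ord.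
apply: (cardB (phi := fun z : 'I_nE * 'I_nE * 'I_nS =>
   act (gfam (sa (fsval t) (eN z.1.2)) * sN z.2 * (coset_rep (eN z.1.1))^-1)%g m0)).
move=> m; rewrite inE -finset.setI_eq0 => /set0Pn [y].
rewrite finset.in_setI !inE => /andP [/existsP [a /eqP ya] /existsP [b /eqP yb]].
set Y := fsval y in ya yb.
have st : stab act m0 ((gfam Y)^-1 * (gfam (fsval m) * coset_rep (eN a)))%g.
  rewrite /stab /= actM.
  have -> : act (gfam (fsval m) * coset_rep (eN a))%g m0 = Y by rewrite ya.
  by rewrite -{2}(gfamP Y) -actM mulVg act1.
have [c hc] := sNsurj st.
exists (a, b, c) => /=.
by rewrite -yb hc mulVKg mulgK gfamP.
Qed.

Lemma Ut_tile t : t \in cand -> (#|Pat q0 X (Ut t)| < #|Q| ^ #|Ut t|)%N.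
Proof.
move=> tc.
set h := (gfam (fsval t) * (gfam m0)^-1)%g.
pose pat (y : F) : Q := match pselect (K (act h^-1 (fsval y))) with
  | left pf => p (exist _ _ pf) | right _ => q0 end.
apply: (Pat_tile (f := [ffun y => if y \in Ut t then pat y else q0])).
  apply/pffun_onP; split; last by move=> ?.
  by apply/fintype.subsetP => y; rewrite inE ffunE; case: ifP => // _; rewrite eqxx.
rewrite inE; apply/negP => /asboolP [x Xx Hx].
apply: (Hp (x := fun m => x (act h^-1^-1 m))); first exact: HX.
apply: funext => -[v Kv].
rewrite /restr /= invgK.
have Kv' := Kv.
case: Kv' => a _ va.
have hF : sa (fsval t) (eN a) \in F by move: tc; rewrite inE => /forallP.
have yU : FSetSub hF \in Ut t by rewrite inE; apply/existsP; exists a.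
have -> : act h v = sa (fsval t) (eN a) by rewrite -va keyid.
have := Hx (FSetSub hF); rewrite ffunE yU /= => <-.
have e : act h^-1 (sa (fsval t) (eN a)) = v.
  by rewrite -va -keyid -actM mulVg act1.
rewrite /pat /=; case: pselect => [pf|nK]; last by exfalso; apply: nK; rewrite e.
move: pf; rewrite e => pf; congr p; congr exist; exact: Prop_irrelevance.
Qed.

End Cell.

Lemma ev_all (I : Type) (le : I -> I -> Prop) (Hd : is_directed le) (A : finType)
  (P : A -> I -> Prop) :
  (forall a, exists i0, forall i, le i0 i -> P a i) ->
  exists i0, forall i, le i0 i -> forall a, P a i.
Proof.
move=> HP.
suff: forall s : seq A, exists i0, forall i, le i0 i -> forall a, a \in s -> P a i.
  by move=> /(_ (enum A)) [i0 H]; exists i0 => i /H Hi a; apply: Hi; rewrite mem_enum.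
elim => [|a s [i1 H1]].
  by case: (dir_nonempty Hd) => i; exists i.
have [i2 H2] := HP a; have [k [k1 k2]] := dir_upper Hd i1 i2.
exists k => i ki b; rewrite inE => /orP [/eqP -> | bs].
  exact: H2 (dir_trans Hd k2 ki).
exact: H1 (dir_trans Hd k1 ki) _ bs.
Qed.


Local Open Scope ring_scope.

Lemma folner_cand (R : realType) (G : groupType) (M : choiceType) (act : G -> M -> M)
  (m0 : M) (gfam : M -> G) (I : Type) (le : I -> I -> Prop) (F : I -> {fset M})
  (HF : right_folner_net act m0 gfam R le F) (nE : nat) (eN : 'I_nE -> coset act m0) :
  exists i0, forall i, le i0 i -> (#|` F i|%:R <= 2 * #|cand gfam eN (F i)|%:R :> R)%R.
Proof.
case: HF => Hd [Hne Hcvg].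
pose eps : R := (2 * nE.+1%:R)^-1.
have ep : (0 < eps)%R by rewrite invr_gt0 mulr_gt0 // ltr0n.
have [i0 H0] := ev_all Hd (fun a => Hcvg (eN a) eps ep).
exists i0 => i /H0 Hi.
set n := #|` F i|.
have n0 : (0 < n%:R :> R)%R by rewrite ltr0n cardfs_gt0 Hne.
pose bad a : {set F i} := [set m : F i | semi_act act m0 gfam (fsval m) (eN a) \notin F i]%SET.
have Hbad a : (#|bad a|%:R <= eps * n%:R :> R)%R.
  have := Hi a; rewrite subr0.
  have -> : #|bad a| = #|` [fset m in F i | semi_act act m0 gfam m (eN a) \notin F i]%fset|.
    rewrite -(card_fsub (fset_sub _ _)); apply: eq_card => m; rewrite !inE fsvalP /=.
    by [].
  move=> /ltW; rewrite ger0_norm ?divr_ge0 // ler_pdivrMr //.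
have Hc : (#|~: cand gfam eN (F i)| <= \sum_(a <- index_enum 'I_nE) #|bad a|)%N.
  apply: (leq_trans _ (unstable.card_big_setU (index_enum 'I_nE) predT bad)).
  apply: subset_leq_card; apply/fintype.subsetP => m.
  rewrite !inE negb_forall => /existsP [a ha].
  by apply/bigcupP; exists a => //; rewrite inE.
have : (#|~: cand gfam eN (F i)|%:R <= n%:R / 2 :> R)%R.
  apply: (le_trans (y := (\sum_(a <- index_enum 'I_nE) #|bad a|)%:R)); first by rewrite ler_nat.
  rewrite natr_sum.
  apply: (le_trans (y := \sum_(a <- index_enum 'I_nE) (eps * n%:R))); first exact: ler_sum.
  rewrite sumr_const card_ord -mulr_natr.
  have e1 : eps * (2 * (nE%:R + 1)) = 1.
    by rewrite natr1 /eps mulVf // mulf_neq0 // pnatr_eq0.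
  have := mulr_gt0 ep n0.
  nra.
have Hn : n = (#|cand gfam eN (F i)| + #|~: cand gfam eN (F i)|)%N.
  by rewrite /n cardfE cardsC.
rewrite Hn !natrD => H.
lra.
Qed.

Lemma num_final (R : realType) (Np n j Nb : nat) (q rho : R) :
  1 < q -> 0 < rho -> rho <= 1 -> (0 < n)%N -> (0 < Nb)%N ->
  (n%:R <= 2 * (j * Nb)%:R :> R) ->
  (Np%:R <= q ^+ n * rho ^+ j) ->
  ln (Np%:R : R) / n%:R <= Num.max 0 (ln q + ln rho / (2 * Nb%:R)).
Proof.
move=> q1 rho0 rho1 n0 Nb0 hn hNp.
have n0R : (0 < n%:R :> R) by rewrite ltr0n.
have Nb0R : (0 < Nb%:R :> R) by rewrite ltr0n.
have [->|Np0] := eqVneq Np 0%N.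
  by rewrite ln0 // mul0r le_max lexx.
have Np0R : (0 < Np%:R :> R) by rewrite ltr0n lt0n.
have q0 : 0 < q by apply: lt_trans q1.
rewrite le_max; apply/orP; right.
have hl : ln (Np%:R : R) <= n%:R * ln q + j%:R * ln rho.
  have -> : n%:R * ln q = ln (q ^+ n) by rewrite lnXn // mulr_natl.
  have -> : j%:R * ln rho = ln (rho ^+ j) by rewrite lnXn // mulr_natl.
  rewrite -lnM ?posrE ?exprn_gt0 //.
  by rewrite ler_ln ?posrE ?mulr_gt0 ?exprn_gt0.
have r0 : ln rho <= 0 by apply: ln_le0.
set w := ln rho / (2 * Nb%:R).
have hw : ln rho = w * (2 * Nb%:R) by rewrite /w mulfVK // mulf_neq0 // lt0r_neq0.
have w0 : w <= 0 by rewrite /w pmulr_lle0 // invr_gt0 mulr_gt0.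
rewrite ler_pdivrMr //.
rewrite natrM in hn.
have h2 : j%:R * ln rho <= w * n%:R.
  have hA : 0 <= - w by rewrite oppr_ge0.
  have hB : 0 <= 2 * (j%:R * Nb%:R) - n%:R :> R by rewrite subr_ge0.
  have := mulr_ge0 hA hB.
  have eP : - w * (2 * (j%:R * Nb%:R) - n%:R) = w * n%:R - j%:R * (w * (2 * Nb%:R)).
    by ring.
  by rewrite eP subr_ge0 hw.
rewrite mulrDl.
apply: (le_trans hl).
rewrite [n%:R * _]mulrC lerD2l.
exact: h2.
Qed.

Local Close Scope ring_scope.

Theorem corollary2 (R : realType) (G : groupType) (M : choiceType)
  (act : G -> M -> M) (m0 : M) (gfam : M -> G)
  (Hcs : is_cell_space act m0 gfam)
  (Hamen : right_amenable act m0 gfam R)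
  (Hstab : finite_set (stab act m0))
  (Q : finType) (HQ : (1 < #|Q|)%N)
  (I : Type) (le : I -> I -> Prop) (F : I -> {fset M})
  (HF : right_folner_net act m0 gfam R le F)
  (X : set (M -> Q)) (HX : act_invariant act X)
  (E : set (coset act m0)) (HEfin : finite_set E) (HE0 : E !=set0)
  (HEproper : ~ (forall p : {m : M | [set semi_act act m0 gfam m0 e | e in E] m} -> Q,
                   exists2 x, X x & restr [set semi_act act m0 gfam m0 e | e in E] x = p)) :
  (entropy R le F X < (ln (#|Q|%:R : R))%:E)%E.
Proof.
case: Hcs => [[act1 actM] _ gfamP].
have [nE [eN [eNE eNsurj]]] := finite_enum HEfin.
have [nS [sN [sNS sNsurj]]] := finite_enum Hstab.
have [e0 Ee0] := HE0.
have [a0 _] := eNsurj e0 Ee0.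
have [q0 _] : exists q0 : Q, True by have /card_gt0P [x _] := ltnW HQ; exists x.
have [s1 _] : exists s1 : 'I_nS, True.
  have [s1 _] := sNsurj 1%g (act1 m0); by exists s1.
have eK : [set semi_act act m0 gfam m0 e | e in E] =
          [set semi_act act m0 gfam m0 (eN a) | a in [set: 'I_nE]].
  apply/seteqP; split => m.
    by case=> e Ee <-; have [a ae] := eNsurj e Ee; exists a => //; rewrite ae.
  by case=> a _ <-; exists (eN a).
rewrite eK in HEproper.
move/existsNP: HEproper => [p Hp'].
have Hp : forall x, X x -> restr [set semi_act act m0 gfam m0 (eN a) | a in [set: 'I_nE]] x <> p.
  by move=> x Xx e; apply: Hp'; exists x.
set q := #|Q|.
set Nb := (nE * nE * nS)%N.
set rho : R := (1 - (q%:R ^+ nE)^-1)%R.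
have [i0 Hi0] := folner_cand HF eN.
have HQR : (1 < q%:R :> R)%R by rewrite ltr1n.
have nE0 : (0 < nE)%N by apply: (leq_ltn_trans (leq0n a0)); exact: ltn_ord.
have nS0 : (0 < nS)%N by apply: (leq_ltn_trans (leq0n s1)); exact: ltn_ord.
have Nb0 : (0 < Nb)%N by rewrite /Nb !muln_gt0 nE0 nS0.
have qN1 : (1 < q%:R ^+ nE :> R)%R by rewrite exprn_egt1 // -lt0n.
have rho0 : (0 < rho)%R by rewrite /rho subr_gt0 invf_lt1 // (lt_trans ltr01).
have rho1 : (rho <= 1)%R.
  by rewrite /rho lerBlDr lerDl invr_ge0 (le_trans ler01) // ltW.
set c := Num.max 0%R (ln (q%:R : R) + ln rho / (2 * Nb%:R))%R.
have Hbound : forall i, le i0 i ->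
    (ln (npatterns X (F i))%:R / #|` F i|%:R <= c)%R.
  move=> i hi.
  have H1 : forall t, t \in cand gfam eN (F i) ->
     [/\ (#|Pat q0 X (Ut gfam eN t)| < q ^ #|Ut gfam eN t|)%N,
         (#|Ut gfam eN t| <= nE)%N & Ut gfam eN t != finset.set0].
    move=> t tc; split.
    - exact: (Ut_tile act1 actM q0 HX Hp tc).
    - exact: Ut_card.
    - have := Ut_ne a0 tc. move=> h. exact: h.
  have H2 : forall t : F i, (#|Bt (Ut gfam eN (F := F i)) t| <= Nb)%N.
    by move=> t; apply: (Bt_card act1 actM gfamP eN sNsurj).
  have [j [hj hP]] := greedy_bound R H1 H2.
  have eNp : npatterns X (F i) = #|Pat q0 X [set: F i]|.
    apply: eq_card => pf; rewrite !inE; apply/asboolP/asboolP => -[x Xx H];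
      exists x => // m; by rewrite H inE.
  rewrite eNp.
  apply: num_final => //.
  - by rewrite cardfs_gt0; case: HF => _ [Hne _]; exact: Hne.
  - apply: (le_trans (Hi0 i hi)); rewrite ler_pM2l // ler_nat; exact: hj.
  - by rewrite cardfE.
have lq0 : (0 < ln (q%:R : R))%R by apply: ln_gt0.
have cq : (c < ln (q%:R : R))%R.
  rewrite /c gt_max lq0 /= -ltrBrDl subrr.
  rewrite pmulr_llt0 ?invr_gt0 ?mulr_gt0 ?ltr0n //.
  by apply: ln_lt0; rewrite rho0 /= /rho ltrBlDr ltrDl invr_gt0 (lt_trans ltr01).
rewrite /entropy /net_limsup.
apply: (le_lt_trans (y := c%:E)); last by rewrite lte_fin.
apply: le_trans; first by apply: ereal_inf_lbound; exists i0.
apply/ereal_supP => y [j hj <-].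
by rewrite lee_fin; apply: Hbound.
Qed.
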